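(* Let $\mathbb{K}$ be a field, let $\{i,j,k\}=\{1,2,3\}$, let $R=\mathbb{K}[x_i,x_j,x_k]$ with homogeneous maximal ideal $\mathfrak{m}=\langle x_i,x_j,x_k\rangle$, and let $I\subseteq R$ be a support-$2$ monomial ideal such that $G(I)$ is the $3$-cycle on $x_i,x_j,x_k$. Then: (a) if $\alpha_{i,j}\ge 2$ and $\alpha_{j,k}\ge 2$, then $\mathfrak{m}\in\mathrm{Ass}(I)$; (b) if $\alpha_{i,k}=\alpha_{j,k}=1$ and $\alpha_{i,j}\ge 2$, then $\mathfrak{m}\notin\mathrm{Ass}(I)$ if and only if $w^1_{i,k}\ge\mu_{i,j}$ and $w^1_{j,k}\ge\mu_{j,i}$.
   Context: For a monomial ideal $I$, $\mathcal{G}(I)$ denotes its minimal set of monomial generators. $I$ is a support-$2$ monomial ideal if every element of $\mathcal{G}(I)$ has the form $x_a^{p}x_b^{q}$ with $a\neq b$ and $p,q\ge 1$. The underlying simple graph $G(I)$ has an edge $\{x_a,x_b\}$ whenever some element of $\mathcal{G}(I)$ has support $\{x_a,x_b\}$. For an edge $\{x_a,x_b\}$, $\alpha_{a,b}=\alpha_{b,a}$ is the number of elements of $\mathcal{G}(I)$ with support exactly $\{x_a,x_b\}$, and $\mu_{a,b}$ is the maximum exponent of $x_a$ among them. When $\alpha_{a,b}=1$, $w^1_{a,b}$ denotes the exponent of $x_a$ in the unique element of $\mathcal{G}(I)$ with support $\{x_a,x_b\}$. $\mathrm{Ass}(I)$ is the set of associated primes of $R/I$. *)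

(* Defs.v *)
From mathcomp Require Import all_boot all_order all_algebra.
From mathcomp Require Import mpoly.
Set Implicit Arguments. Unset Strict Implicit. Unset Printing Implicit Defensive.
Import GRing.Theory.
Local Open Scope ring_scope.

(* A monomial of K[x_1,x_2,x_3] is represented by its exponent vector 'X_{1..3};
   variables are indexed by 'I_3.  The polynomial monomial is 'X_[m]. *)

Definition in_mon_ideal (K : fieldType) (G : seq 'X_{1..3}) (f : {mpoly K[3]}) : Prop :=
  exists c : 'X_{1..3} -> {mpoly K[3]}, f = \sum_(m <- G) c m * 'X_[m].

Definition max_ideal_gens : seq 'X_{1..3} := [seq U_(a)%MM | a <- enum 'I_3].

Definition is_ass_prime (K : fieldType) (I P : {mpoly K[3]} -> Prop) : Prop :=
  exists f : {mpoly K[3]}, forall g : {mpoly K[3]}, I (g * f) <-> P g.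

Definition msupp (m : 'X_{1..3}) : pred 'I_3 := [pred a | m a != 0%N].

Definition support2_min_gens (G : seq 'X_{1..3}) : Prop :=
  uniq G /\
  (forall m1 m2, m1 \in G -> m2 \in G -> (m1 <= m2)%MM -> m1 = m2) /\
  (forall m, m \in G -> #|msupp m| = 2%N).

Definition gens_on (G : seq 'X_{1..3}) (a b : 'I_3) : seq 'X_{1..3} :=
  [seq m : 'X_{1..3} <- G | [forall c : 'I_3, (m c != 0%N) == ((c == a) || (c == b))]].

Definition is_edge (G : seq 'X_{1..3}) (a b : 'I_3) : Prop :=
  a != b /\ gens_on G a b != [::].

Definition alpha (G : seq 'X_{1..3}) (a b : 'I_3) : nat := size (gens_on G a b).

Definition mu (G : seq 'X_{1..3}) (a b : 'I_3) : nat :=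
  \max_(m <- gens_on G a b) m a.

(* w^1_{a,b}: exponent of x_a in the (unique, when alpha_{a,b} = 1) generator
   with support {x_a,x_b} *)
Definition w1 (G : seq 'X_{1..3}) (a b : 'I_3) : nat :=
  (head 0%MM (gens_on G a b)) a.

(* Main.v *)
Require Import Defs.
From mathcomp Require Import all_boot all_order all_algebra.
From mathcomp Require Import mpoly.
From mathcomp Require Import zify.
Set Implicit Arguments. Unset Strict Implicit. Unset Printing Implicit Defensive.

Definition Dv (G : seq 'X_{1..3}) u := has (fun g => (g <= u)%MM) G.
Definition dist (p q r : 'I_3) := [&& p != q, q != r & p != r].

Lemma I3 (i j k : 'I_3) : dist i j k -> forall c, [|| c == i, c == j | c == k].
Proof.
move: i j k; do 3 case=> [[|[|[|?]]] ?] //; move=> _ [[|[|[|?]]] ?] //.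
Qed.

Lemma sum3 (F : 'I_3 -> nat) i j k : dist i j k ->
  (\sum_(c < 3) F c = F i + F j + F k)%N.
Proof.
move=> d; have H := I3 d; move: d => /and3P [ij jk ik].
rewrite (bigD1 i) //= (bigD1 j) /=; last by rewrite eq_sym.
rewrite (bigD1 k) /=; last by rewrite ![k == _]eq_sym (negbTE ik) (negbTE jk).
rewrite big1 ?addn0 ?addnA // => c /andP [/andP [ci cj] ck].
by move: (H c); rewrite (negbTE ci) (negbTE cj) (negbTE ck).
Qed.

Lemma supp_count (m : 'X_{1..3}) i j k : dist i j k ->
  #|Defs.msupp m| = ((m i != 0%N) + (m j != 0%N) + (m k != 0%N))%N.
Proof.
move=> d; rewrite -sum1_card big_mkcond /= (sum3 (fun c => if c \in Defs.msupp m then 1%N else 0%N) d).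
by rewrite !inE; do 3 case: (_ != 0%N).
Qed.

Lemma dist_perm1 p q r : dist p q r -> dist q p r.
Proof. by case/and3P => pq qr pr; apply/and3P; split; try done; rewrite eq_sym. Qed.
Lemma dist_perm2 p q r : dist p q r -> dist p r q.
Proof. by case/and3P => pq qr pr; apply/and3P; split; try done; rewrite eq_sym. Qed.
Lemma dist_perm3 p q r : dist p q r -> dist q r p.
Proof. by case/and3P => pq qr pr; apply/and3P; split; try done; rewrite eq_sym. Qed.

Lemma le3 (m1 m2 : 'X_{1..3}) i j k : dist i j k ->
  (m1 i <= m2 i)%N -> (m1 j <= m2 j)%N -> (m1 k <= m2 k)%N -> (m1 <= m2)%MM.
Proof.
move=> d hi hj hk; apply/mnm_lepP => c.
by case/or3P: (I3 d c) => /eqP ->.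
Qed.

Lemma gens_onP G p q r g : dist p q r ->
  (g \in gens_on G p q) = [&& g \in G, g p != 0%N, g q != 0%N & g r == 0%N].
Proof.
move=> d; have H := I3 d; move: d => /and3P [pq qr pr].
rewrite mem_filter andbC; congr (_ && _).
apply/forallP/idP.
  move=> Hc; move: (Hc p) (Hc q) (Hc r); rewrite !eqxx orbT /=.
  rewrite (eq_sym r p) (negbTE pr) (eq_sym r q) (negbTE qr) /=.
  by move=> /eqP -> /eqP -> /eqP /negbFE ->.
case/and3P => hp hq hr c; case/or3P: (H c) => /eqP ->.
- by rewrite eqxx hp.
- by rewrite eqxx orbT hq.
- by rewrite hr (eq_sym r p) (negbTE pr) (eq_sym r q) (negbTE qr).
Qed.

Lemma gens_on_sym G p q : gens_on G p q = gens_on G q p.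
Proof. by apply: eq_filter => m; apply: eq_forallb => c; rewrite orbC. Qed.

Lemma gen_cases G p q r g : dist p q r -> support2_min_gens G -> g \in G ->
  g r = 0%N -> g \in gens_on G p q.
Proof.
move=> d [_ [_ S]] gG gr; rewrite (gens_onP _ _ d) gG gr eqxx andbT /=.
by move: (S g gG); rewrite (supp_count _ d) gr eqxx /=; do 2 case: (_ != 0%N).
Qed.

Lemma gen_nz G p q r g : dist p q r -> support2_min_gens G -> g \in G ->
  g r != 0%N -> g \in gens_on G p r \/ g \in gens_on G q r.
Proof.
move=> d S gG gr; have [gp|gp] := eqVneq (g p) 0%N.
  by right; apply: (gen_cases (r := p)) => //; apply: dist_perm3.
left; apply: (gen_cases (r := q)) => //; first exact: dist_perm2.
case: S => _ [_ S]; move: (S g gG); rewrite (supp_count _ d) gr gp /=.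
by case: (g q) => //= n; rewrite addn1.
Qed.

Lemma same_edge G p q r g h : dist p q r -> support2_min_gens G ->
  g \in gens_on G p q -> h \in gens_on G p q ->
  (g p <= h p)%N -> (g q <= h q)%N -> g = h.
Proof.
move=> d [_ [A _]]; rewrite !(gens_onP _ _ d) => /and4P [gG _ _ /eqP gr] /and4P [hG _ _ /eqP hr] l1 l2.
by apply: A => //; apply: (le3 d) => //; rewrite gr hr.
Qed.

Definition shift (u : 'X_{1..3}) (a : 'I_3) (n : nat) : 'X_{1..3} :=
  [multinom (if c == a then (u c + n)%N else u c) | c < 3].

Definition Ev (G : seq 'X_{1..3}) (u : 'X_{1..3}) (a : 'I_3) := exists2 g, g \in G & forall c, c != a -> (g c <= u c)%N.

Lemma Dv_mono G u w : Dv G u -> (u <= w)%MM -> Dv G w.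
Proof.
move=> /hasP [g gG /mnm_lepP le] /mnm_lepP le'; apply/hasP; exists g => //.
by apply/mnm_lepP => c; apply: leq_trans (le c) (le' c).
Qed.

Lemma Ev_mono G u w a : Ev G u a -> (u <= w)%MM -> Ev G w a.
Proof.
move=> [g gG le] /mnm_lepP le'; exists g => // c ca.
by apply: leq_trans (le c ca) (le' c).
Qed.

Lemma shift_ge u a n : (u <= shift u a n)%MM.
Proof. by apply/mnm_lepP => c; rewrite mnmE; case: (c == a) => //; apply: leq_addr. Qed.

Lemma lemD1 (u w : 'X_{1..3}) a : (u <= w)%MM -> (u + U_(a) <= w + U_(a))%MM.
Proof.
by move/mnm_lepP => le; apply/mnm_lepP => c; rewrite !mnmDE leq_add2r.
Qed.

Lemma lemT (a b c : 'X_{1..3}) : (a <= b)%MM -> (b <= c)%MM -> (a <= c)%MM.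
Proof.
move=> /mnm_lepP h1 /mnm_lepP h2; apply/mnm_lepP => x; exact: leq_trans (h1 x) (h2 x).
Qed.

Lemma step G u a : ~~ Dv G u -> Ev G u a ->
  exists n, ~~ Dv G (shift u a n) /\ Dv G (shift u a n + U_(a))%MM.
Proof.
move=> nD [g gG le].
have ex : exists n, Dv G (shift u a n).
  exists (g a); apply/hasP; exists g => //; apply/mnm_lepP => c; rewrite mnmE.
  by case: eqP => [->|/eqP ca]; [apply: leq_addl | apply: le].
have s0 : shift u a 0 = u by apply/mnmP => c; rewrite mnmE addn0; case: (c == a).
have [N HN Hmin] := ex_minnP ex.
have N0 : N != 0%N by apply: contraTneq HN => ->; rewrite s0.
exists N.-1; split.
  by apply/negP => /Hmin; rewrite leqNgt; case: N N0 {HN Hmin} => // n _; rewrite ltnSn.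
suff -> : (shift u a N.-1 + U_(a))%MM = shift u a N by [].
apply/mnmP => c; rewrite mnmDE mnm1E !mnmE.
by rewrite (eq_sym a c); case: (c == a) => /=; lia.
Qed.

Lemma sat G u i j k : dist i j k -> ~~ Dv G u -> Ev G u i -> Ev G u j -> Ev G u k ->
  exists w, ~~ Dv G w /\ forall a, Dv G (w + U_(a))%MM.
Proof.
move=> d nD ei ej ek.
have [n1 [nD1 D1]] := step nD ei.
set u1 := shift u i n1 in nD1 D1.
have [n2 [nD2 D2]] := step nD1 (Ev_mono ej (shift_ge u i n1)).
set u2 := shift u1 j n2 in nD2 D2.
have le12 : (u <= u2)%MM.
  exact: lemT (shift_ge u i n1) (shift_ge u1 j n2).
have [n3 [nD3 D3]] := step nD2 (Ev_mono ek le12).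
exists (shift u2 k n3); split => // a.
case/or3P: (I3 d a) => /eqP -> //.
- apply: (Dv_mono D1); apply: lemD1.
  exact: lemT (shift_ge u1 j n2) (shift_ge u2 k n3).
- by apply: (Dv_mono D2); apply: lemD1; apply: shift_ge.
Qed.

Lemma other (T : eqType) (s : seq T) x : uniq s -> (2 <= size s)%N -> exists2 y, y \in s & y != x.
Proof.
move=> us s2; case: (boolP (has (fun y => y != x) s)) => [/hasP [y ys yx]|/hasPn H]; first by exists y.
have : (size s <= size [:: x])%N.
  by apply: uniq_leq_size => // y ys; rewrite inE; move: (H y ys); rewrite negbK.
by rewrite /=; lia.
Qed.

Lemma uniq_gens G p q : support2_min_gens G -> uniq (gens_on G p q).
Proof. by case=> uG _; apply: filter_uniq. Qed.

Lemma natF1 n x : (0 < n)%N -> (n <= x)%N -> (x <= n.-1)%N -> False.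
Proof. lia. Qed.
Lemma natF2 a b : (a < b)%N -> (a <= b.-1)%N.
Proof. lia. Qed.
Lemma natF3 n : n != 0%N -> (n <= n.-1)%N -> False.
Proof. lia. Qed.

Lemma pairlemma G p q r : dist p q r -> support2_min_gens G -> (2 <= alpha G p q)%N ->
  exists u g1, [/\ g1 \in gens_on G p q, ~~ Dv G u, Ev G u p, Ev G u q &
     [/\ (g1 p <= u p)%N, u q = (g1 q).-1 & u r = 0%N]].
Proof.
move=> d S a2; set s := gens_on G p q.
have us : uniq s by apply: uniq_gens.
have {}a2 : (2 <= size s)%N by [].
have ex1 : exists n, has (fun g : 'X_{1..3} => g p == n) s.
  case E: s a2 => [|x s'] //= _; exists (x p); by rewrite eqxx.
have [n1 /hasP [g1 g1s /eqP g1n] min1] := ex_minnP ex1.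
have g1min : forall h, h \in s -> (g1 p <= h p)%N.
  by move=> h hs; rewrite g1n; apply: min1; apply/hasP; exists h.
have ex2 : exists n, has (fun g : 'X_{1..3} => (g != g1) && (g p == n)) s.
  have [y ys yg1] := other g1 us a2; exists (y p); apply/hasP; exists y => //; by rewrite yg1 eqxx.
have [n2 /hasP [g2 g2s /andP [g21 /eqP g2n]] min2] := ex_minnP ex2.
have g2min : forall h, h \in s -> h != g1 -> (n2 <= h p)%N.
  by move=> h hs hg1; apply: min2; apply/hasP; exists h => //; rewrite hg1 eqxx.
have oth : forall h, h \in s -> h != g1 -> (h q < g1 q)%N /\ (g1 p < h p)%N.
  move=> h hs hg1; have hq : (h q < g1 q)%N.
    rewrite ltnNge; apply/negP => le; move/eqP: hg1; apply.
    by apply/esym/(same_edge d S g1s hs) => //; apply: g1min.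
  split => //; rewrite ltn_neqAle g1min // andbT; apply/negP => /eqP E.
  by move/eqP: hg1; apply; apply: (same_edge d S hs g1s) => //; [rewrite E | apply: ltnW].
have [g1q g1p] := oth _ g2s g21.
move: (d) => /and3P [pq qr pr].
have g1G : g1 \in G /\ g1 q != 0%N /\ g1 r = 0%N.
  by move: g1s; rewrite (gens_onP _ _ d) => /and4P [-> _ -> /eqP ->].
have g2G : g2 \in G /\ g2 r = 0%N.
  by move: g2s; rewrite (gens_onP _ _ d) => /and4P [-> _ _ /eqP ->].
case: g1G => g1G [g1q0 g1r]; case: g2G => g2G g2r.
pose u := [multinom (if c == p then n2.-1 else if c == q then (g1 q).-1 else 0%N) | c < 3].
have up : u p = n2.-1 by rewrite mnmE eqxx.
have uq : u q = (g1 q).-1 by rewrite mnmE eq_sym (negbTE pq) eqxx.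
have ur : u r = 0%N by rewrite mnmE eq_sym (negbTE pr) eq_sym (negbTE qr).
exists u, g1; split => //.
- apply/hasP => -[g gG /mnm_lepP le].
  have gs : g \in s by apply: (gen_cases d S gG); apply/eqP; move: (le r); rewrite ur leqn0.
  have [E|ne] := eqVneq g g1.
    by move: (le q); rewrite uq E; apply: natF3.
  by apply: (natF1 _ (g2min g gs ne)); [rewrite -g2n; apply: leq_ltn_trans g1p | rewrite -up].
- exists g2 => // c cp; case/or3P: (I3 d c) => /eqP E; rewrite E.
  + by rewrite E eqxx in cp.
  + by rewrite uq; apply: natF2.
  + by rewrite g2r.
- exists g1 => // c cq; case/or3P: (I3 d c) => /eqP E; rewrite E.
  + by rewrite up -g2n; apply: natF2.
  + by rewrite E eqxx in cq.
  + by rewrite g1r.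
- by split => //; rewrite up -g2n; apply: natF2.
Qed.

Lemma bigmax_att (s : seq 'X_{1..3}) (F : 'X_{1..3} -> nat) :
  s != [::] -> exists2 x, x \in s & (\max_(m <- s) F m)%N = F x.
Proof.
elim: s => // x s IH _; rewrite big_cons.
have [->|ne] := eqVneq s [::].
  by exists x; rewrite ?mem_head // big_nil maxn0.
have [y ys ->] := IH ne; case: (leqP (F y) (F x)) => h.
  by exists x; rewrite ?mem_head.
by exists y; rewrite ?inE ?ys ?orbT.
Qed.

Lemma backlemma G p q r : dist p q r -> support2_min_gens G -> (2 <= alpha G p q)%N ->
  gens_on G p r != [::] -> (w1 G p r < mu G p q)%N ->
  exists u, [/\ ~~ Dv G u, Ev G u p, Ev G u q & Ev G u r].
Proof.
move=> d S a2 ne lt; set s := gens_on G p q.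
have us : uniq s by apply: uniq_gens.
have {}a2 : (2 <= size s)%N by [].
have sne : s != [::] by case: (s) a2.
have [gT gTs gTm] := bigmax_att (fun m => m p) sne.
have mu_eq : mu G p q = gT p by [].
have [g' g's g'T] := other gT us a2.
have g'p : (g' p < gT p)%N.
  rewrite -mu_eq ltn_neqAle [X in _ && X](leq_bigmax_seq (F := fun m : 'X_{1..3} => m p)) //.
  rewrite andbT mu_eq; apply/negP => /eqP E; move/eqP: g'T; apply.
  case: (leqP (g' q) (gT q)) => h.
    by apply: (same_edge d S g's gTs) => //; rewrite E.
  by apply/esym/(same_edge d S gTs g's) => //; [rewrite E | apply: ltnW].
move: (d) => /and3P [pq qr pr].
have d' : dist p r q by apply: dist_perm2.
set h := head 0%MM (gens_on G p r).
have hs : h \in gens_on G p r by rewrite /h; case: (gens_on G p r) ne => // x l _; rewrite mem_head.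
have w1h : w1 G p r = h p by [].
move: (hs); rewrite (gens_onP _ _ d') => /and4P [hG _ _ /eqP hq].
move: (gTs); rewrite (gens_onP _ _ d) => /and4P [gTG gTp0 _ /eqP gTr].
move: (g's); rewrite (gens_onP _ _ d) => /and4P [g'G _ _ /eqP g'r].
pose u := [multinom (if c == p then (gT p).-1 else if c == q then gT q else 0%N) | c < 3].
have up : u p = (gT p).-1 by rewrite mnmE eqxx.
have uq : u q = gT q by rewrite mnmE eq_sym (negbTE pq) eqxx.
have ur : u r = 0%N by rewrite mnmE eq_sym (negbTE pr) eq_sym (negbTE qr).
exists u; split.
- apply/hasP => -[g gG /mnm_lepP le].
  have gs : g \in s by apply: (gen_cases d S gG); apply/eqP; move: (le r); rewrite ur leqn0.
  have gp := le p; rewrite up in gp.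
  have E : g = gT.
    apply: (same_edge d S gs gTs); last by rewrite -uq.
    by apply: leq_trans gp (leq_pred _).
  by move: gp; rewrite E; apply: natF3.
- exists gT => // c cp; case/or3P: (I3 d c) => /eqP E; rewrite E.
  + by rewrite E eqxx in cp.
  + by rewrite uq.
  + by rewrite gTr.
- exists g' => // c cq; case/or3P: (I3 d c) => /eqP E; rewrite E.
  + by rewrite up; apply: natF2.
  + by rewrite E eqxx in cq.
  + by rewrite g'r.
- exists h => // c cr; case/or3P: (I3 d c) => /eqP E; rewrite E.
  + by rewrite up; apply: natF2; rewrite -w1h -mu_eq.
  + by rewrite hq.
  + by rewrite E eqxx in cr.
Qed.

Lemma fwdlemma G p q r u g : dist p q r -> support2_min_gens G -> alpha G p r = 1%N ->
  (mu G p q <= w1 G p r)%N -> ~~ Dv G u -> Dv G (u + U_(p))%MM ->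
  g \in gens_on G p r -> (g <= u + U_(r))%MM -> False.
Proof.
move=> d S a1 le nD Dp gs /mnm_lepP gle.
move: (d) => /and3P [pq qr pr].
have d' : dist p r q by apply: dist_perm2.
move: (gs); rewrite (gens_onP _ _ d') => /and4P [gG _ _ /eqP gq].
have [g0 E] : exists g0, gens_on G p r = [:: g0].
  by move: a1; rewrite /alpha; case: (gens_on G p r) => [|x [|]] //; exists x.
have w1g : w1 G p r = g p by move: gs; rewrite /w1 E mem_seq1 => /eqP ->.
have gp : (g p <= u p)%N by move: (gle p); rewrite mnmDE mnm1E (eq_sym r p) (negbTE pr) addn0.
have gr : (u r < g r)%N.
  rewrite ltnNge; apply/negP => h; move/negP: nD; apply; apply/hasP; exists g => //.
  by apply: (le3 d) => //; rewrite gq.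
case/hasP: Dp => h hG /mnm_lepP hle.
have hp : (u p < h p)%N.
  rewrite ltnNge; apply/negP => h'; move/negP: nD; apply; apply/hasP; exists h => //.
  apply: (le3 d) => //.
  - by move: (hle q); rewrite mnmDE mnm1E (negbTE pq) addn0.
  - by move: (hle r); rewrite mnmDE mnm1E (negbTE pr) addn0.
have hp0 : h p != 0%N by apply: contraTneq hp => ->.
case: (gen_nz (dist_perm3 d) S hG hp0); rewrite -!(gens_on_sym G p) => hs.
  have hmu : (h p <= mu G p q)%N.
    by rewrite /mu; apply: (leq_bigmax_seq (F := fun m : 'X_{1..3} => m p) h hs).
  by move: (leq_trans hmu (leq_trans le (leq_trans (eq_leq w1g) gp))); rewrite leqNgt hp.
move: hs; rewrite E mem_seq1 => /eqP hg.
have gg0 : g = g0 by move: gs; rewrite E mem_seq1 => /eqP.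
rewrite -gg0 in hg.
have := hle r; rewrite mnmDE mnm1E (negbTE pr) addn0 hg => h'.
by move: (leq_ltn_trans h' gr); rewrite ltnn.
Qed.

Import GRing.Theory.
Local Open Scope ring_scope.

Section Poly.
Variable K : fieldType.
Implicit Types (G : seq 'X_{1..3}) (f h : {mpoly K[3]}) (u : 'X_{1..3}).


Lemma ideal0 G : in_mon_ideal G (0 : {mpoly K[3]}).
Proof. exists (fun _ => 0); by rewrite big1 // => m _; rewrite mul0r. Qed.

Lemma idealD G f (g : {mpoly K[3]}) : in_mon_ideal G f -> in_mon_ideal G g -> in_mon_ideal G (f + g).
Proof.
move=> [c1 ->] [c2 ->]; exists (fun m => c1 m + c2 m).
by rewrite -big_split /=; apply: eq_bigr => m _; rewrite mulrDl.
Qed.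

Lemma idealM G f h : in_mon_ideal G f -> in_mon_ideal G (h * f).
Proof.
move=> [c ->]; exists (fun m => h * c m).
by rewrite mulr_sumr; apply: eq_bigr => m _; rewrite mulrA.
Qed.

Lemma ideal_sum G (s : seq 'X_{1..3}) (F : 'X_{1..3} -> {mpoly K[3]}) :
  (forall m, m \in s -> in_mon_ideal G (F m)) -> in_mon_ideal G (\sum_(m <- s) F m).
Proof.
move=> H; rewrite big_seq; apply: (big_ind (in_mon_ideal G)).
- exact: ideal0.
- exact: idealD.
- exact: H.
Qed.

Lemma idealX G u g : uniq G -> g \in G -> (g <= u)%MM -> in_mon_ideal G ('X_[u] : {mpoly K[3]}).
Proof.
move=> uG gG le; exists (fun m => if m == g then 'X_[u - g] else 0).
rewrite (bigD1_seq g) //= eqxx big1 => [|m /negbTE ->]; last by rewrite mul0r.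
by rewrite addr0 -mpolyXD submK.
Qed.

Lemma ideal_coef G f u : in_mon_ideal G f -> f@_u != 0 -> Dv G u.
Proof.
move=> [c ->]; apply: contraNT => /hasPn H.
rewrite raddf_sum /=; apply/eqP; apply: big1_seq => m /andP[_ mG].
apply/eqP; rewrite mcoeff_eq0; apply/negP => Hu.
have := perm_mem (msuppMX (c m) m); move/(_ u); rewrite Hu => /esym/mapP[m' _ E].
by move: (H m mG); rewrite E lem_addr.
Qed.


Lemma uniq_max : uniq max_ideal_gens.
Proof.
rewrite map_inj_uniq ?enum_uniq // => a b /mnmP /(_ a).
by rewrite !mnm1E eqxx; case: (b == a) / eqP.
Qed.

Lemma max_ideal_iff (g : {mpoly K[3]}) : in_mon_ideal max_ideal_gens g <-> g@_0%MM = 0.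
Proof.
split.
  move=> H; apply/eqP; apply: contraT => /(ideal_coef H) /hasP [x /mapP [a _ ->]].
  by move/mnm_lepP/(_ a); rewrite mnm1E eqxx mnmE.
move=> H0; rewrite (mpolyE g); apply: ideal_sum => m Hm.
have [a Ha] : exists a, m a != 0%N.
  apply/existsP; apply: contraT; rewrite negb_exists => /forallP Hm0.
  have m0 : m = 0%MM by apply/mnmP => a; rewrite mnmE; apply/eqP; rewrite -[_ == _]negbK Hm0.
  by move: Hm; rewrite mcoeff_msupp m0 H0 eqxx.
rewrite -mul_mpolyC; apply: idealM; apply: (idealX uniq_max (g := U_(a)%MM)).
  by apply/mapP; exists a; rewrite ?mem_enum.
apply/mnm_lepP => b; rewrite mnm1E; case: eqP => [<-|]; [by rewrite lt0n | by []].
Qed.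

Lemma ass_iff G : uniq G ->
  (is_ass_prime (in_mon_ideal G) (in_mon_ideal (K := K) max_ideal_gens) <->
   exists u, ~~ Dv G u /\ forall a, Dv G (u + U_(a))%MM).
Proof.
move=> uG; split.
  move=> [f H].
  have nIf : ~ in_mon_ideal G f.
    move=> If; have /H : in_mon_ideal G (1 * f) by rewrite mul1r.
    by move/max_ideal_iff; rewrite mcoeff1 eqxx; move/eqP; rewrite oner_eq0.
  have [/hasP [u Hu nD]|nh] := boolP (has (fun m => ~~ Dv G m) (msupp f)); last first.
    case: nIf; rewrite (mpolyE f); apply: ideal_sum => m Hm.
    move/hasPn: nh => /(_ m Hm); rewrite negbK => /hasP [g0 g0G le].
    by rewrite -mul_mpolyC; apply: idealM; apply: (idealX uG g0G le).
  exists u; split => // a.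
  have : in_mon_ideal G ('X_[U_(a)] * f).
    apply/H/max_ideal_iff; rewrite mcoeffX mnm1_eq0 //.
  move/ideal_coef => /(_ (U_(a) + u)%MM) HH; rewrite addmC; apply: HH.
  by rewrite mulrC mcoeffMX -mcoeff_msupp.
move=> [u [nD HD]]; exists 'X_[u] => g; split.
  move=> Ig; apply/max_ideal_iff; apply/eqP; apply: contraT => g0.
  have := ideal_coef (u := (u + 0)%MM) Ig; rewrite mcoeffMX addm0 => /(_ g0).
  by rewrite (negbTE nD).
move=> [c ->]; rewrite mulr_suml; apply: ideal_sum => m /mapP [a _ ->].
rewrite -mulrA -mpolyXD; apply: idealM.
move: (HD a) => /hasP [g0 g0G le]; apply: (idealX uG g0G); by rewrite addmC.
Qed.

End Poly.

Theorem proposition4p8 (K : fieldType) (G : seq 'X_{1..3}) (i j k : 'I_3) :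
  i != j -> j != k -> i != k ->
  support2_min_gens G ->
  is_edge G i j -> is_edge G j k -> is_edge G i k ->
  ((2 <= alpha G i j)%N -> (2 <= alpha G j k)%N ->
     is_ass_prime (in_mon_ideal G) (in_mon_ideal (K := K) max_ideal_gens)) /\
  (alpha G i k = 1%N -> alpha G j k = 1%N -> (2 <= alpha G i j)%N ->
     (~ is_ass_prime (in_mon_ideal G) (in_mon_ideal (K := K) max_ideal_gens) <->
      (mu G i j <= w1 G i k)%N /\ (mu G j i <= w1 G j k)%N)).
Proof.
move=> ij jk ik S [_ Eij] [_ Ejk] [_ Eik].
have d : dist i j k by rewrite /dist ij jk ik.
have uG : uniq G by case: S.
rewrite (ass_iff K uG); split.
  move=> a2 a3.
  have [u [g1 [g1s nD Epu Equ [g1pu uj uk]]]] := pairlemma d S a2.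
  have [u' [h1 [h1s nD' Eju' Eku' [h1ju' u'k u'i]]]] := pairlemma (dist_perm3 d) S a3.
  move: (g1s); rewrite (gens_onP _ _ d) => /and4P [g1G _ _ /eqP g1k].
  move: (h1s); rewrite (gens_onP _ _ (dist_perm3 d)) => /and4P [h1G _ _ /eqP h1i].
  case: (ltnP (h1 j) (g1 j)) => c.
    apply: (sat d nD Epu Equ); exists h1 => // x xk.
    case/or3P: (I3 d x) => /eqP E; rewrite E.
    + by rewrite h1i.
    + by rewrite uj; apply: natF2.
    + by rewrite E eqxx in xk.
  apply: (sat d nD' _ Eju' Eku'); exists g1 => // x xi.
  case/or3P: (I3 d x) => /eqP E; rewrite E.
  + by rewrite E eqxx in xi.
  + exact: leq_trans c h1ju'.
  + by rewrite g1k.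
move=> a1 a2 a3; split.
  move=> nA.
  case: (leqP (mu G i j) (w1 G i k)) => h1; case: (leqP (mu G j i) (w1 G j k)) => h2;
    try done; exfalso; apply: nA.
  - have a3' : (2 <= alpha G j i)%N by rewrite /alpha gens_on_sym.
    have [u [nD Ej Ei Ek]] := backlemma (dist_perm1 d) S a3' Ejk h2.
    exact: sat d nD Ei Ej Ek.
  - have [u [nD Ei Ej Ek]] := backlemma d S a3 Eik h1.
    exact: sat d nD Ei Ej Ek.
  - have [u [nD Ei Ej Ek]] := backlemma d S a3 Eik h1.
    exact: sat d nD Ei Ej Ek.
move=> [c1 c2] [u [nD HD]].
have /hasP [g gG /mnm_lepP gle] := HD k.
move: (d) => /and3P [_ _ _].
have gk : g k != 0%N.
  apply/negP => /eqP gk0; move/negP: nD; apply; apply/hasP; exists g => //.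
  apply: (le3 d).
  - by move: (gle i); rewrite mnmDE mnm1E (eq_sym k i) (negbTE ik) addn0.
  - by move: (gle j); rewrite mnmDE mnm1E (eq_sym k j) (negbTE jk) addn0.
  - by rewrite gk0.
have gle' : (g <= u + U_(k))%MM by apply/mnm_lepP.
case: (gen_nz d S gG gk) => gs.
  exact: (fwdlemma d S a1 c1 nD (HD i) gs gle').
exact: (fwdlemma (dist_perm1 d) S a2 c2 nD (HD j) gs gle').
Qed.
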